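(* Let $\mathbb{X}$ be a category with finite products. For pre-$\mathsf{D}$-sequences $f_\bullet:A\to B$ and $g_\bullet:B\to C$: (i) $\mathsf{T}(i_\bullet)=i_\bullet$ (with $i_\bullet$ on the left the identity of $A$ and on the right the identity of $A\times A$); (ii) $\mathsf{T}(f_\bullet\ast g_\bullet)=\mathsf{T}(f_\bullet)\ast\mathsf{T}(g_\bullet)$.
   Context: Composition in diagrammatic order. $\mathsf{P}(A)=A\times A$, $\mathsf{P}(f)=f\times f$. A pre-$\mathsf{D}$-sequence $f_\bullet:A\to B$ is $(f_n)_{n\ge0}$ with $f_n:\mathsf{P}^n(A)\to B$. Tangent $\mathsf{T}(f_\bullet):\mathsf{P}(A)\to\mathsf{P}(B)$, $\mathsf{T}(f_\bullet)_n=\langle\mathsf{P}^n(\pi_0)f_n,f_{n+1}\rangle$, with $\mathsf{T}^n$ its iterate. Identity $i_\bullet:A\to A$: $i_0=1_A$, $i_n=\pi_1\cdots\pi_1:\mathsf{P}^n(A)\to A$ ($n$ projections). Composition $(f_\bullet\ast g_\bullet)_n=\mathsf{T}^n(f_\bullet)_0\,g_n$. *)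

(* Defs.v *)
(* Plain Rocq (no library category theory is installed).
   A category with finite products (binary products + terminal object),
   composition written in DIAGRAMMATIC order: comp f g = "f then g". *)
Set Implicit Arguments.

Record FPCat := {
  ob :> Type;
  hom : ob -> ob -> Type;
  idm : forall A, hom A A;
  comp : forall A B C, hom A B -> hom B C -> hom A C;
  comp_assoc : forall A B C D (f : hom A B) (g : hom B C) (h : hom C D),
      comp (comp f g) h = comp f (comp g h);
  id_comp : forall A B (f : hom A B), comp (idm A) f = f;
  comp_id : forall A B (f : hom A B), comp f (idm B) = f;
  prod : ob -> ob -> ob;
  pi0 : forall A B, hom (prod A B) A;
  pi1 : forall A B, hom (prod A B) B;
  pair : forall X A B, hom X A -> hom X B -> hom X (prod A B);
  pair_pi0 : forall X A B (f : hom X A) (g : hom X B), comp (pair f g) (pi0 A B) = f;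
  pair_pi1 : forall X A B (f : hom X A) (g : hom X B), comp (pair f g) (pi1 A B) = g;
  pair_uniq : forall X A B (h : hom X (prod A B)),
      h = pair (comp h (pi0 A B)) (comp h (pi1 A B));
  term : ob;
  bang : forall A, hom A term;
  bang_uniq : forall A (f g : hom A term), f = g
}.

Arguments hom {_} _ _.
Arguments idm {_} _.
Arguments comp {_ _ _ _} _ _.
Arguments prod {_} _ _.
Arguments pi0 {_} _ _.
Arguments pi1 {_} _ _.
Arguments pair {_ _ _ _} _ _.

Section PreD.
Variable X : FPCat.

Definition P (A : X) : X := prod A A.
Definition Pmap {A B : X} (f : hom A B) : hom (P A) (P B) :=
  pair (comp (pi0 A A) f) (comp (pi1 A A) f).

(* P^n, with P^(n+1)(A) unfolding definitionally to P^n(P(A)) *)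
Fixpoint Pn (n : nat) (A : X) : X :=
  match n with O => A | S m => Pn m (P A) end.
Fixpoint Pnmap (n : nat) {A B : X} (f : hom A B) : hom (Pn n A) (Pn n B) :=
  match n with O => f | S m => Pnmap m (Pmap f) end.

Definition preD (A B : X) : Type := forall n : nat, hom (Pn n A) B.

Definition Tan {A B : X} (f : preD A B) : preD (P A) (P B) :=
  fun n => pair (comp (Pnmap n (pi0 A A)) (f n)) (f (S n)).

Fixpoint Tn (n : nat) {A B : X} (f : preD A B) : preD (Pn n A) (Pn n B) :=
  match n with O => f | S m => Tn m (Tan f) end.

Fixpoint idD_n (n : nat) (A : X) : hom (Pn n A) A :=
  match n with
  | O => idm A
  | S m => comp (idD_n m (P A)) (pi1 A A)
  end.
Definition idD (A : X) : preD A A := fun n => idD_n n A.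

Definition compD {A B C : X} (f : preD A B) (g : preD B C) : preD A C :=
  fun n => comp (Tn n f 0) (g n).

End PreD.

Arguments P {X} A.
Arguments Pmap {X A B} f.
Arguments Pn {X} n A.
Arguments Pnmap {X} n {A B} f.
Arguments preD {X} A B.
Arguments Tan {X A B} f n.
Arguments Tn {X} n {A B} f _.
Arguments idD_n {X} n A.
Arguments idD {X} A n.
Arguments compD {X A B C} f g n.

(* Main.v *)
Require Import Defs.
Set Implicit Arguments.
From Corelib Require Import ssreflect.

Section L.
Variable X : FPCat.

Lemma comp_pair (Y Z A B : X) (h : hom Y Z) (a : hom Z A) (b : hom Z B) :
  comp h (pair a b) = pair (comp h a) (comp h b).
Proof.
  rewrite (@pair_uniq X _ _ _ (comp h (pair a b))).
  rewrite !comp_assoc pair_pi0 pair_pi1. reflexivity.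
Qed.

Lemma Pmap_comp (A B C : X) (a : hom A B) (b : hom B C) :
  Pmap (comp a b) = comp (Pmap a) (Pmap b).
Proof.
  unfold Pmap. rewrite comp_pair. rewrite -!comp_assoc.
  rewrite pair_pi0 pair_pi1. rewrite !comp_assoc. reflexivity.
Qed.

Lemma Pnmap_comp n : forall (A B C : X) (a : hom A B) (b : hom B C),
  Pnmap n (comp a b) = comp (Pnmap n a) (Pnmap n b).
Proof.
  induction n; intros; simpl. reflexivity.
  rewrite Pmap_comp. apply IHn.
Qed.

Lemma Pmap_pi0 (A B : X) (h : hom A B) : comp (Pmap h) (pi0 B B) = comp (pi0 A A) h.
Proof. unfold Pmap. apply pair_pi0. Qed.
Lemma Pmap_pi1 (A B : X) (h : hom A B) : comp (Pmap h) (pi1 B B) = comp (pi1 A A) h.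
Proof. unfold Pmap. apply pair_pi1. Qed.

Lemma idD_nat n : forall (A B : X) (h : hom A B),
  comp (Pnmap n h) (idD_n n B) = comp (idD_n n A) h.
Proof.
  induction n; intros; simpl.
  rewrite comp_id id_comp; reflexivity.
  rewrite -comp_assoc IHn comp_assoc Pmap_pi1 -comp_assoc. reflexivity.
Qed.

Definition Rel (A B A' B' : X) (h : hom A' A) (h' : hom B' B)
  (f : preD A B) (f' : preD A' B') :=
  forall k, comp (Pnmap k h) (f k) = comp (f' k) h'.

Lemma Rel_Tan (A B A' B' : X) h h' f f' :
  @Rel A B A' B' h h' f f' -> Rel (Pmap h) (Pmap h') (Tan f) (Tan f').
Proof.
  intros R k. unfold Tan. etransitivity. apply comp_pair.
  symmetry. etransitivity. apply pair_uniq. symmetry.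
  f_equal.
  - rewrite !comp_assoc Pmap_pi0 -(@comp_assoc _ _ _ _ _ (pair _ _)) pair_pi0.
    rewrite -comp_assoc -Pnmap_comp Pmap_pi0 Pnmap_comp comp_assoc R comp_assoc.
    reflexivity.
  - rewrite !comp_assoc Pmap_pi1 -(@comp_assoc _ _ _ _ _ (pair _ _)) pair_pi1.
    apply (R (S k)).
Qed.

Lemma Rel_Tn m : forall (A B A' B' : X) h h' f f',
  @Rel A B A' B' h h' f f' -> Rel (Pnmap m h) (Pnmap m h') (Tn m f) (Tn m f').
Proof.
  induction m; intros; simpl. exact H.
  apply IHm. apply Rel_Tan. exact H.
Qed.

End L.

Theorem lemma3p6 (X : FPCat) (A B C : X) (f : preD A B) (g : preD B C) :
  (forall n, Tan (idD A) n = idD (P A) n) /\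
  (forall n, Tan (compD f g) n = compD (Tan f) (Tan g) n).
Proof.
  split; intro n.
  - unfold Tan, idD. simpl. rewrite idD_nat.
    symmetry. apply pair_uniq.
  - unfold Tan, compD. simpl. rewrite comp_pair.
    f_equal. rewrite -!comp_assoc. f_equal.
    assert (R : Rel (pi0 A A) (pi0 B B) f (Tan f)).
    { intro k. unfold Tan. rewrite pair_pi0. reflexivity. }
    apply (Rel_Tn n R 0).
Qed.
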